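(* Let $R$ be a commutative ring and $S$ a multiplicative subset of $R$. Then: (1) every $S$-finite $u$-$S$-projective $R$-module is $u$-$S$-finitely presented; (2) every $u$-$S$-finitely presented $u$-$S$-flat $R$-module is $u$-$S$-projective.
   Context: A multiplicative subset $S$ contains $1$ and is closed under products. A sequence $A\xrightarrow{f}B\xrightarrow{g}C$ is $u$-$S$-exact at $B$ if there is $s\in S$ with $s\,\mathrm{Ker}(g)\subseteq\mathrm{Im}(f)$ and $s\,\mathrm{Im}(f)\subseteq\mathrm{Ker}(g)$; a sequence is $u$-$S$-exact if it is so at each inner term. An $R$-module $P$ is $u$-$S$-projective (resp. $u$-$S$-flat) if for every $u$-$S$-exact sequence $0\to A\to B\to C\to 0$ the induced sequence $0\to\mathrm{Hom}_R(P,A)\to\mathrm{Hom}_R(P,B)\to\mathrm{Hom}_R(P,C)\to 0$ (resp. $0\to P\otimes_RA\to P\otimes_RB\to P\otimes_RC\to 0$) is $u$-$S$-exact. An $R$-module $M$ is $S$-finite if there are $s\in S$ and a finitely generated submodule $F\subseteq M$ with $sM\subseteq F$. $M$ is $u$-$S$-finitely presented if there are $s\in S$ and an exact sequence $0\to T_1\to F\to M\to T_2\to 0$ with $F$ finitely presented and $sT_1=sT_2=0$. *)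

(* Defs.v *)
From HB Require Import structures.
From mathcomp Require Import all_boot all_order all_algebra.
Set Implicit Arguments. Unset Strict Implicit. Unset Printing Implicit Defensive.
Import Order.TTheory GRing.Theory Num.Theory.
Local Open Scope ring_scope.

Section UDefs.
Variable R : comPzRingType.

Definition mult_subset (S : {pred R}) : Prop :=
  1 \in S /\ {in S &, forall u v, u * v \in S}.

Variable S : {pred R}.

(* Elements of X (resp. Y) are those satisfying inX (resp. inY);
   eqY is equality in Y, zZ is "equal to zero" in Z, sY is the R-action on Y. *)
Definition uS_exact_at {X Y Z : Type} (inX : X -> Prop) (inY : Y -> Prop)
  (eqY : Y -> Y -> Prop) (zZ : Z -> Prop) (sY : R -> Y -> Y)
  (F : X -> Y) (G : Y -> Z) : Prop :=
  exists2 s, s \in S &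
    (forall y, inY y -> zZ (G y) -> exists2 x, inX x & eqY (F x) (sY s y)) /\
    (forall x, inX x -> zZ (G (sY s (F x)))).

Definition uS_exact_mod (A B C : lmodType R) (f : A -> B) (g : B -> C) : Prop :=
  @uS_exact_at A B C (fun _ => True) (fun _ => True) eq (fun c => c = 0)
    (fun r b => r *: b) f g.

(* 0 -> A --f--> B --g--> C -> 0 is u-S-exact (at A, B and C);
   the zero maps 0 -> A and C -> 0 have image {0}, resp. kernel C. *)
Definition uS_short_exact (A B C : lmodType R) (f : A -> B) (g : B -> C) : Prop :=
  uS_exact_mod (fun _ : A => 0 : A) f /\ uS_exact_mod f g /\
  uS_exact_mod g (fun _ : C => 0 : C).

(* ---- Hom_R(P, -) ----
   Elements of Hom_R(P,A) are the R-linear maps P -> A (equality pointwise,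
   R-action pointwise); f_* is post-composition. *)
Definition uS_exact_hom (P A B C : lmodType R) (f : A -> B) (g : B -> C) : Prop :=
  @uS_exact_at (P -> A) (P -> B) (P -> C)
    (fun h => linear h) (fun h => linear h)
    (fun h1 h2 => forall p, h1 p = h2 p) (fun h => forall p, h p = 0)
    (fun r h => fun p => r *: h p) (fun h => f \o h) (fun h => g \o h).

Definition uS_short_exact_hom (P A B C : lmodType R) (f : A -> B) (g : B -> C) : Prop :=
  uS_exact_hom P (fun _ : A => 0 : A) f /\ uS_exact_hom P f g /\
  uS_exact_hom P g (fun _ : C => 0 : C).

(* ---- Tensor product P (x)_R A ----
   P (x)_R A is the free abelian group Z[P x A] modulo the subgroup generated by
   the bilinearity relations.  An element of Z[P x A] is represented by a formal
   sum  t = [:: (n_1, (p_1, a_1)); ...]  meaning  sum n_i (p_i, a_i). *)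
Definition fcoef {T : eqType} (t : seq (int * T)) (x : T) : int :=
  \sum_(y <- t | y.2 == x) y.1.

Definition tensor_rel (P A : lmodType R) (r : seq (int * (P * A))) : Prop :=
  (exists (p p' : P) (a : A), r = [:: (1, (p + p', a)); (-1, (p, a)); (-1, (p', a))])
  \/ (exists (p : P) (a a' : A), r = [:: (1, (p, a + a')); (-1, (p, a)); (-1, (p, a'))])
  \/ (exists (c : R) (p : P) (a : A), r = [:: (1, (c *: p, a)); (-1, (p, c *: a))]).

Definition tensor_zero (P A : lmodType R) (t : seq (int * (P * A))) : Prop :=
  exists L : seq (int * seq (int * (P * A))),
    (forall l, l \in L -> tensor_rel l.2) /\
    (forall x, fcoef t x = \sum_(l <- L) l.1 * fcoef l.2 x).

Definition tensor_sub (P A : lmodType R) (t1 t2 : seq (int * (P * A))) :=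
  t1 ++ map (fun y => (- y.1, y.2)) t2.

Definition tensor_scale (P A : lmodType R) (r : R) (t : seq (int * (P * A))) :=
  map (fun y => (y.1, (y.2.1, r *: y.2.2))) t.

Definition tensor_map (P A B : lmodType R) (f : A -> B) (t : seq (int * (P * A))) :
  seq (int * (P * B)) := map (fun y => (y.1, (y.2.1, f y.2.2))) t.

Definition uS_exact_tensor (P A B C : lmodType R) (f : A -> B) (g : B -> C) : Prop :=
  @uS_exact_at (seq (int * (P * A))) (seq (int * (P * B))) (seq (int * (P * C)))
    (fun _ => True) (fun _ => True)
    (fun t1 t2 => tensor_zero (tensor_sub t1 t2)) (@tensor_zero P C)
    (@tensor_scale P B) (tensor_map f) (tensor_map g).

Definition uS_short_exact_tensor (P A B C : lmodType R) (f : A -> B) (g : B -> C) : Prop :=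
  uS_exact_tensor P (fun _ : A => 0 : A) f /\ uS_exact_tensor P f g /\
  uS_exact_tensor P g (fun _ : C => 0 : C).

Definition uS_projective (P : lmodType R) : Prop :=
  forall (A B C : lmodType R) (f : A -> B) (g : B -> C),
    linear f -> linear g -> uS_short_exact f g -> uS_short_exact_hom P f g.

Definition uS_flat (P : lmodType R) : Prop :=
  forall (A B C : lmodType R) (f : A -> B) (g : B -> C),
    linear f -> linear g -> uS_short_exact f g -> uS_short_exact_tensor P f g.

Definition S_finite (M : lmodType R) : Prop :=
  exists2 s, s \in S & exists (n : nat) (x : 'I_n -> M),
    forall m : M, exists c : 'I_n -> R, s *: m = \sum_(i < n) c i *: x i.

Definition fin_presented (F : lmodType R) : Prop :=
  exists (n m : nat) (phi : 'rV[R]_m -> 'rV[R]_n) (pi : 'rV[R]_n -> F),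
    [/\ linear phi, linear pi, (forall y : F, exists v, pi v = y) &
        (forall v, pi v = 0 <-> exists w, phi w = v)].

Definition uS_fin_presented (M : lmodType R) : Prop :=
  exists2 s, s \in S &
  exists (T1 F T2 : lmodType R) (i : T1 -> F) (h : F -> M) (q : M -> T2),
    [/\ linear i, linear h, linear q, fin_presented F &
    [/\ (forall t, i t = 0 -> t = 0),
        (forall y, h y = 0 <-> exists t, i t = y),
        (forall m, q m = 0 <-> exists y, h y = m) &
        (forall z : T2, exists m, q m = z)]] /\
    ((forall t : T1, s *: t = 0) /\ (forall z : T2, s *: z = 0)).

End UDefs.

(* Main.v *)
Require Import Defs.
From HB Require Import structures.
From mathcomp Require Import all_boot all_order all_algebra.
From Stdlib Require Import ClassicalEpsilon ClassicalDescription FunctionalExtensionality PropExtensionality.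
From mathcomp Require Import ring.
Set Implicit Arguments. Unset Strict Implicit. Unset Printing Implicit Defensive.
Import Order.TTheory GRing.Theory Num.Theory.
Local Open Scope ring_scope.

Definition pb (P : Prop) : bool := if excluded_middle_informative P then true else false.
Lemma pbP (P : Prop) : pb P <-> P.
Proof. rewrite /pb; case: excluded_middle_informative => //. Qed.

Section Lin.
Variables (R : comPzRingType) (U V : lmodType R) (f : U -> V) (lf : linear f).
Lemma lin0 : f 0 = 0.
Proof. have h := lf 1 0 0; rewrite !scale1r addr0 in h. by apply: (@addrI _ (f 0)); rewrite addr0 -h. Qed.
Lemma linD u v : f (u + v) = f u + f v.
Proof. by have := lf 1 u v; rewrite !scale1r. Qed.
Lemma linZ a u : f (a *: u) = a *: f u.
Proof. by have := lf a u 0; rewrite !addr0 lin0 addr0. Qed.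
Lemma linN u : f (- u) = - f u.
Proof. by rewrite -scaleN1r linZ scaleN1r. Qed.
Lemma linB u v : f (u - v) = f u - f v.
Proof. by rewrite linD linN. Qed.
Lemma lin_sum I (r : seq I) (P : pred I) (F : I -> U) :
  f (\sum_(i <- r | P i) F i) = \sum_(i <- r | P i) f (F i).
Proof. elim/big_rec2: _ => [|i x y _ <-]; [exact: lin0| exact: linD]. Qed.
End Lin.

Lemma linear_comp (R : comPzRingType) (U V W : lmodType R) (f : U -> V) (g : V -> W) :
  linear f -> linear g -> linear (g \o f).
Proof. by move=> lf lg a u v /=; rewrite lf lg. Qed.

Record submod (R : comPzRingType) (M : lmodType R) := Submod {
  smP : M -> Prop;
  smP0 : smP 0;
  smPD : forall a u v, smP u -> smP v -> smP (a *: u + v) }.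

Section Sub.
Variables (R : comPzRingType) (M : lmodType R) (NS : submod M).
Local Notation P := (smP NS).
Let P0 := smP0 NS.
Let PD := @smPD _ _ NS.

Record subT := SubT { subval : M; sprop : pb (P subval) }.
HB.instance Definition _ := [isSub for subval].
HB.instance Definition _ := [Choice of subT by <:].

Lemma PZ a u : P u -> P (a *: u).
Proof. by move=> Pu; have := PD a Pu P0; rewrite addr0. Qed.
Lemma PDD u v : P u -> P v -> P (u + v).
Proof. by move=> Pu Pv; have := PD 1 Pu Pv; rewrite scale1r. Qed.
Lemma PN u : P u -> P (- u).
Proof. by move=> Pu; rewrite -scaleN1r; apply: PZ. Qed.

Definition mkS (x : M) (h : P x) : subT := SubT (proj2 (pbP (P x)) h).
Definition s0 : subT := mkS P0.
Definition sadd (a b : subT) : subT :=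
  mkS (PDD (proj1 (pbP _) (sprop a)) (proj1 (pbP _) (sprop b))).
Definition sopp (a : subT) : subT := mkS (PN (proj1 (pbP _) (sprop a))).
Definition sscale (c : R) (a : subT) : subT := mkS (PZ c (proj1 (pbP _) (sprop a))).

Lemma saddA : associative sadd.
Proof. by move=> a b c; apply: val_inj; rewrite /= addrA. Qed.
Lemma saddC : commutative sadd.
Proof. by move=> a b; apply: val_inj; rewrite /= addrC. Qed.
Lemma sadd0 : left_id s0 sadd.
Proof. by move=> a; apply: val_inj; rewrite /= add0r. Qed.
Lemma saddN : left_inverse s0 sopp sadd.
Proof. by move=> a; apply: val_inj; rewrite /= addNr. Qed.
HB.instance Definition _ := GRing.isZmodule.Build subT saddA saddC sadd0 saddN.
Lemma sscaleA a b v : sscale a (sscale b v) = sscale (a * b) v.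
Proof. by apply: val_inj; rewrite /= scalerA. Qed.
Lemma sscale1 : left_id 1 sscale.
Proof. by move=> v; apply: val_inj; rewrite /= scale1r. Qed.
Lemma sscaleDr : right_distributive sscale +%R.
Proof. by move=> a u v; apply: val_inj; rewrite /= scalerDr. Qed.
Lemma sscaleDl v : {morph sscale^~ v: a b / a + b}.
Proof. by move=> a b; apply: val_inj; rewrite /= scalerDl. Qed.
HB.instance Definition _ := GRing.Zmodule_isLmodule.Build R subT sscaleA sscale1 sscaleDr sscaleDl.

Lemma subval_lin : linear (subval : subT -> M).
Proof. by []. Qed.
Lemma subvalP (x : subT) : P (subval x).
Proof. exact: (proj1 (pbP _) (sprop x)). Qed.
Lemma subval_inj : injective (subval : subT -> M).
Proof. exact: val_inj. Qed.
End Sub.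

Section Quot.
Variables (R : comPzRingType) (M : lmodType R) (NS : submod M).
Local Notation N := (smP NS).
Let N0 := smP0 NS.
Let ND := @smPD _ _ NS.

Lemma NZ a u : N u -> N (a *: u).
Proof. by move=> Pu; have := ND a Pu N0; rewrite addr0. Qed.
Lemma NDD u v : N u -> N v -> N (u + v).
Proof. by move=> Pu Pv; have := ND 1 Pu Pv; rewrite scale1r. Qed.
Lemma NN u : N u -> N (- u).
Proof. by move=> Pu; rewrite -scaleN1r; apply: NZ. Qed.
Lemma NB u v : N u -> N v -> N (u - v).
Proof. by move=> Nu Nv; apply: NDD => //; apply: NN. Qed.

Definition rep (x : M) : M := epsilon (inhabits 0) (fun y => N (y - x)).
Lemma rep_spec x : N (rep x - x).
Proof. by apply: (epsilon_spec (inhabits 0) (fun y => N (y - x))); exists x; rewrite subrr. Qed.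
Lemma rep_eq x y : N (x - y) -> rep x = rep y.
Proof.
move=> Nxy; rewrite /rep; congr epsilon; apply: functional_extensionality => z.
apply: propositional_extensionality; split => h.
  by have := NDD h Nxy; rewrite addrA subrK.
by have := NB h Nxy; rewrite opprB addrA subrK.
Qed.
Lemma rep_eqN x y : rep x = rep y -> N (x - y).
Proof.
move=> e; have := NB (rep_spec y) (rep_spec x); rewrite e.
have -> : rep y - y - (rep y - x) = x - y.
  by rewrite opprB addrC addrA addrNK.
done.
Qed.
Lemma rep_idem x : rep (rep x) = rep x.
Proof. exact/rep_eq/rep_spec. Qed.

Record quotT := QT { qval : M; qprop : rep qval == qval }.
HB.instance Definition _ := [isSub for qval].
HB.instance Definition _ := [Choice of quotT by <:].

Definition mkQ (x : M) : quotT := @QT (rep x) (introT eqP (rep_idem x)).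
Lemma mkQ_eq x y : mkQ x = mkQ y <-> N (x - y).
Proof.
split; first by move=> /(congr1 qval) /= /rep_eqN.
by move=> h; apply: val_inj; rewrite /= (rep_eq h).
Qed.
Lemma mkQK (a : quotT) : mkQ (qval a) = a.
Proof. by apply: val_inj => /=; apply/eqP/qprop. Qed.
Lemma mkQ_surj (a : quotT) : exists x, mkQ x = a.
Proof. by exists (qval a); apply: mkQK. Qed.
Lemma qval_equiv (x : M) : N (qval (mkQ x) - x).
Proof. exact: rep_spec. Qed.

Definition q0 := mkQ 0.
Definition qadd (a b : quotT) := mkQ (qval a + qval b).
Definition qopp (a : quotT) := mkQ (- qval a).
Definition qscale (c : R) (a : quotT) := mkQ (c *: qval a).
Lemma qaddE x y : qadd (mkQ x) (mkQ y) = mkQ (x + y).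
Proof.
apply/mkQ_eq; have := NDD (qval_equiv x) (qval_equiv y).
by rewrite /= opprD addrACA.
Qed.
Lemma qoppE x : qopp (mkQ x) = mkQ (- x).
Proof. by apply/mkQ_eq; have := NN (qval_equiv x); rewrite /= opprB opprK addrC. Qed.
Lemma qscaleE c x : qscale c (mkQ x) = mkQ (c *: x).
Proof. by apply/mkQ_eq; have := NZ c (qval_equiv x); rewrite /= scalerBr. Qed.

Lemma qaddA : associative qadd.
Proof. by move=> a b c; rewrite -(mkQK a) -(mkQK b) -(mkQK c) !qaddE addrA. Qed.
Lemma qaddC : commutative qadd.
Proof. by move=> a b; rewrite -(mkQK a) -(mkQK b) !qaddE addrC. Qed.
Lemma qadd0 : left_id q0 qadd.
Proof. by move=> a; rewrite -(mkQK a) /q0 qaddE add0r. Qed.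
Lemma qaddN : left_inverse q0 qopp qadd.
Proof. by move=> a; rewrite -(mkQK a) qoppE qaddE addNr. Qed.
HB.instance Definition _ := GRing.isZmodule.Build quotT qaddA qaddC qadd0 qaddN.
Lemma qscaleA a b v : qscale a (qscale b v) = qscale (a * b) v.
Proof. by rewrite -(mkQK v) !qscaleE scalerA. Qed.
Lemma qscale1 : left_id 1 qscale.
Proof. by move=> v; rewrite -(mkQK v) !qscaleE scale1r. Qed.
Lemma qscaleDr a u v : qscale a (qadd u v) = qadd (qscale a u) (qscale a v).
Proof. have [x <-] := mkQ_surj u. have [y <-] := mkQ_surj v. by rewrite (qaddE x y) (qscaleE a (x+y)) (qscaleE a x) (qscaleE a y) (qaddE (a*:x) (a*:y)) scalerDr. Qed.
Lemma qscaleDl v a b : qscale (a + b) v = qadd (qscale a v) (qscale b v).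
Proof. have [x <-] := mkQ_surj v. by rewrite (qscaleE (a+b) x) (qscaleE a x) (qscaleE b x) (qaddE (a*:x) (b*:x)) scalerDl. Qed.
HB.instance Definition _ := GRing.Zmodule_isLmodule.Build R quotT qscaleA qscale1 qscaleDr qscaleDl.

Lemma mkQ_lin : linear mkQ.
Proof. by move=> a u v; rewrite -qaddE -qscaleE. Qed.
Lemma mkQ_zero x : mkQ x = 0 <-> N x.
Proof. by rewrite (_ : 0 = mkQ 0) // mkQ_eq subr0. Qed.
End Quot.

Section KerIm.
Variables (R : comPzRingType) (U V : lmodType R) (f : U -> V) (lf : linear f).
Lemma ker0 : f 0 = 0. Proof. exact: lin0. Qed.
Lemma kerD a u v : f u = 0 -> f v = 0 -> f (a *: u + v) = 0.
Proof. by move=> hu hv; rewrite lf hu hv scaler0 addr0. Qed.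
Definition kerS : submod U := Submod ker0 kerD.
Lemma im0 : exists u, f u = 0. Proof. by exists 0; apply: lin0. Qed.
Lemma imD a u v : (exists x, f x = u) -> (exists x, f x = v) -> exists x, f x = a *: u + v.
Proof. by move=> [x <-] [y <-]; exists (a *: x + y); rewrite lf. Qed.
Definition imS : submod V := Submod im0 imD.
End KerIm.

Section Tensor.
Variables (R : comPzRingType) (P A : lmodType R).
Local Notation T := (P * A)%type.

Definition dd (z x : T) : int := if z == x then 1 else 0.

Definition Zs (f : T -> int) : Prop :=
  exists L : seq (int * seq (int * (P * A))),
    (forall l, l \in L -> tensor_rel l.2) /\
    (forall x, f x = \sum_(l <- L) l.1 * fcoef l.2 x).

Lemma tzE (t : seq (int * T)) : tensor_zero t <-> Zs (fcoef t).
Proof. by []. Qed.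

Lemma Zs_ext f g : (forall x, f x = g x) -> Zs f -> Zs g.
Proof. by move=> e [L [HL Hf]]; exists L; split=> // x; rewrite -e. Qed.
Lemma Zs0 : Zs (fun _ => 0).
Proof. by exists [::]; split=> // x; rewrite big_nil. Qed.
Lemma ZsD f g : Zs f -> Zs g -> Zs (fun x => f x + g x).
Proof.
move=> [L1 [H1 E1]] [L2 [H2 E2]]; exists (L1 ++ L2); split.
  by move=> l; rewrite mem_cat => /orP[/H1|/H2].
by move=> x; rewrite E1 E2 big_cat.
Qed.
Lemma ZsZ (n : int) f : Zs f -> Zs (fun x => n * f x).
Proof.
move=> [L [H E]]; exists [seq (n * l.1, l.2) | l <- L]; split.
  by move=> l /mapP[l' /H h ->].
by move=> x; rewrite E big_map mulr_sumr; apply: eq_bigr => l _; rewrite mulrA.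
Qed.
Lemma ZsN f : Zs f -> Zs (fun x => - f x).
Proof. by move=> /(ZsZ (-1)); apply: Zs_ext => x; rewrite mulN1r. Qed.
Lemma ZsB f g : Zs f -> Zs g -> Zs (fun x => f x - g x).
Proof. by move=> Hf /ZsN; apply: ZsD. Qed.
Lemma Zs_sum (I : Type) (r : seq I) (F : I -> T -> int) :
  (forall i, Zs (F i)) -> Zs (fun x => \sum_(i <- r) F i x).
Proof.
move=> H; elim: r => [|i r IH].
  by apply: Zs_ext Zs0 => x; rewrite big_nil.
by apply: Zs_ext (ZsD (H i) IH) => x; rewrite big_cons.
Qed.
Lemma Zs_trans f g h : Zs (fun x => f x - g x) -> Zs (fun x => g x - h x) ->
  Zs (fun x => f x - h x).
Proof. by move=> H1 H2; apply: Zs_ext (ZsD H1 H2) => x; rewrite addrA subrK. Qed.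
Lemma Zs_sym f g : Zs (fun x => f x - g x) -> Zs (fun x => g x - f x).
Proof. by move/ZsN; apply: Zs_ext => x; rewrite opprB. Qed.
Lemma Zs_diff f g : Zs (fun x => f x - g x) -> Zs g -> Zs f.
Proof. by move=> H1 H2; apply: Zs_ext (ZsD H1 H2) => x; rewrite subrK. Qed.

Lemma fcoef_nil x : fcoef ([::] : seq (int * T)) x = 0.
Proof. by rewrite /fcoef big_nil. Qed.
Lemma fcoef_cons y t x : fcoef (y :: t) x = y.1 * dd y.2 x + fcoef t x.
Proof.
rewrite /fcoef big_cons /dd; case: eqP => _; first by rewrite mulr1.
by rewrite mulr0 add0r.
Qed.
Lemma fcoefE t x : fcoef t x = \sum_(y <- t) y.1 * dd y.2 x.
Proof.
elim: t => [|y t IH]; first by rewrite fcoef_nil big_nil.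
by rewrite fcoef_cons big_cons IH.
Qed.
Lemma fcoef_sub (t1 t2 : seq (int * T)) x :
  fcoef (tensor_sub t1 t2) x = fcoef t1 x - fcoef t2 x.
Proof.
rewrite !fcoefE /tensor_sub big_cat big_map /=; congr (_ + _).
by rewrite -sumrN; apply: eq_bigr => y _; rewrite mulNr.
Qed.

Lemma Zs_rel l : tensor_rel l -> Zs (fcoef l).
Proof.
move=> H; exists [:: (1, l)]; split; first by move=> l'; rewrite inE => /eqP ->.
by move=> x; rewrite big_cons big_nil mul1r addr0.
Qed.

Lemma rel1 p p' a : Zs (fun x => dd (p + p', a) x - dd (p, a) x - dd (p', a) x).
Proof.
apply: Zs_ext (Zs_rel (or_introl (ex_intro _ p (ex_intro _ p' (ex_intro _ a erefl))))) => x.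
by rewrite !fcoef_cons fcoef_nil !mul1r !mulN1r addr0 addrA.
Qed.
Lemma rel2 p a a' : Zs (fun x => dd (p, a + a') x - dd (p, a) x - dd (p, a') x).
Proof.
apply: Zs_ext (Zs_rel (or_intror (or_introl (ex_intro _ p (ex_intro _ a (ex_intro _ a' erefl)))))) => x.
by rewrite !fcoef_cons fcoef_nil !mul1r !mulN1r addr0 addrA.
Qed.
Lemma rel3 c p a : Zs (fun x => dd (c *: p, a) x - dd (p, c *: a) x).
Proof.
apply: Zs_ext (Zs_rel (or_intror (or_intror (ex_intro _ c (ex_intro _ p (ex_intro _ a erefl)))))) => x.
by rewrite !fcoef_cons fcoef_nil !mul1r !mulN1r addr0.
Qed.

Section Additive.
Variables (X : zmodType) (D : X -> T -> int).
Hypothesis HD : forall u v, Zs (fun x => D (u + v) x - D u x - D v x).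
Lemma D0 : Zs (D 0).
Proof.
by apply: Zs_ext (ZsN (HD 0 0)) => x; rewrite addr0 subrr sub0r opprK.
Qed.
Lemma DN u : Zs (fun x => D (- u) x + D u x).
Proof.
by apply: Zs_ext (ZsB D0 (HD u (-u))) => x; rewrite subrr; ring.
Qed.
Lemma Dsum (I : Type) (r : seq I) (F : I -> X) :
  Zs (fun x => D (\sum_(i <- r) F i) x - \sum_(i <- r) D (F i) x).
Proof.
elim: r => [|i r IH].
  by apply: Zs_ext D0 => x; rewrite !big_nil subr0.
apply: Zs_ext (ZsD (HD (F i) (\sum_(j <- r) F j)) IH) => x.
rewrite !big_cons; ring.
Qed.
Lemma Dnat u (n : nat) : Zs (fun x => D (u *+ n) x - n%:Z * D u x).
Proof.
apply: Zs_ext (Dsum (index_iota 0 n) (fun _ => u)) => x.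
by rewrite sumr_const_nat subn0 sumr_const_nat subn0 -mulr_natl natz.
Qed.
Lemma Dint u (n : int) : Zs (fun x => D (u *~ n) x - n * D u x).
Proof.
case: n => n; first exact: Dnat.
rewrite /intmul.
have H1 := DN (u *+ n.+1); have H2 := Dnat u n.+1.
apply: Zs_ext (ZsB H1 H2) => x.
rewrite NegzE; ring.
Qed.
End Additive.

Lemma DnegZ (D : A -> T -> int) p : (forall a, D a = dd (p, a)) -> True.
Proof. done. Qed.

Section Eval.
Variables (V : zmodType) (beta : P -> A -> V).
Hypothesis b1 : forall p p' a, beta (p + p') a = beta p a + beta p' a.
Hypothesis b2 : forall p a a', beta p (a + a') = beta p a + beta p a'.
Hypothesis b3 : forall c p a, beta (c *: p) a = beta p (c *: a).

Definition ev (t : seq (int * T)) : V := \sum_(y <- t) beta y.2.1 y.2.2 *~ y.1.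

Lemma sum_dd (r : seq T) z (F : T -> V) : uniq r -> z \in r ->
  \sum_(x <- r) F x *~ dd z x = F z.
Proof.
move=> ur zr; rewrite (bigD1_seq z) //= /dd eqxx mulr1z big1 ?addr0 //.
by move=> x; rewrite eq_sym => /negPf ->; rewrite mulr0z.
Qed.

Lemma ev_support t r : uniq r -> {subset map snd t <= r} ->
  ev t = \sum_(z <- r) beta z.1 z.2 *~ fcoef t z.
Proof.
move=> ur; elim: t => [|y t IH] sub.
  by rewrite /ev big_nil; symmetry; apply: big1 => z _; rewrite fcoef_nil mulr0z.
rewrite /ev big_cons -/(ev t) IH; last by move=> z zt; apply: sub; rewrite /= inE zt orbT.
have yr : y.2 \in r by apply: sub; rewrite /= inE eqxx.
under [in RHS]eq_bigr => z _ do rewrite fcoef_cons mulrzDr (mulrC y.1) mulrzA.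
rewrite big_split /=; congr (_ + _).
rewrite -mulrz_suml.
by rewrite (sum_dd (fun z => beta z.1 z.2)).
Qed.

Lemma ev_rel l : tensor_rel l -> ev l = 0.
Proof.
rewrite /ev; case=> [[p [p' [a ->]]]|[[p [a [a' ->]]]|[c [p [a ->]]]]];
  rewrite !big_cons big_nil /= ?b1 ?b2 ?b3 !mulr1z !mulrN1z addr0;
  rewrite ?addrA; first [by rewrite subrr | by rewrite addrAC addrK subrr].
Qed.

Lemma ev_tz t : tensor_zero t -> ev t = 0.
Proof.
move=> [L [HL E]].
set r := undup (map snd t ++ flatten [seq map snd l.2 | l <- L]).
have ur : uniq r by apply: undup_uniq.
rewrite (@ev_support t r) //; last by move=> z zt; rewrite mem_undup mem_cat zt.
under eq_bigr => z _ do rewrite E mulrz_sumr.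
rewrite exchange_big /=; apply: big1_seq => l /andP[_ lL].
have -> : \sum_(i <- r) beta i.1 i.2 *~ (l.1 * fcoef l.2 i) =
          (\sum_(i <- r) beta i.1 i.2 *~ fcoef l.2 i) *~ l.1.
  by rewrite mulrz_suml; apply: eq_bigr => i _; rewrite mulrC mulrzA.
rewrite -ev_support //; first by rewrite ev_rel ?mul0rz //; apply: HL.
move=> z zl; rewrite mem_undup mem_cat; apply/orP; right.
by apply/flattenP; exists (map snd l.2) => //; apply: map_f.
Qed.
End Eval.
End Tensor.

Section TMore.
Variables (R : comPzRingType) (P A B : lmodType R).

Lemma tz_map0 (x : seq (int * (P * A))) :
  tensor_zero (tensor_map (fun _ : A => (0 : B)) x).
Proof.
apply/tzE.
have H : forall p : P, Zs (dd (p, (0 : B))).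
  by move=> p; exact: (@D0 _ _ _ _ (fun a : B => dd (p, a)) (rel2 p)).
apply: Zs_ext (Zs_sum x (fun y => ZsZ y.1 (H y.2.1))) => z.
by rewrite fcoefE big_map.
Qed.

Lemma tz_sub_cancel (t1 t2 : seq (int * (P * A))) :
  tensor_zero t1 -> tensor_zero (tensor_sub t1 t2) -> tensor_zero t2.
Proof.
move=> /tzE H1 /tzE H2; apply/tzE.
by apply: Zs_ext (ZsB H1 H2) => x; rewrite fcoef_sub opprB addrC subrK.
Qed.
End TMore.

Section TFree.
Variables (R : comPzRingType) (P : lmodType R) (m : nat).
Local Notation T := (P * 'rV[R]_m)%type.

Lemma dd_row (p : P) (a : 'rV[R]_m) :
  Zs (fun x => dd (p, a) x - \sum_(j < m) dd (a 0 j *: p, delta_mx 0 j) x).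
Proof.
have H2 := @Dsum _ _ _ _ (fun b => dd (p, b)) (rel2 p) _ (index_enum 'I_m)
   (fun j => a 0 j *: (delta_mx 0 j : 'rV[R]_m)).
have H3 := Zs_sum (index_enum 'I_m) (fun j => Zs_sym (rel3 (a 0 j) p (delta_mx 0 j : 'rV[R]_m))).
apply: Zs_ext (ZsD H2 H3) => x /=.
rewrite -(row_sum_delta a) -addrA; congr (_ + _).
by rewrite sumrB addrA addNr add0r.
Qed.

Lemma tz_free (t : seq (int * T)) :
  (forall j : 'I_m, \sum_(y <- t) (y.2.2 0 j *: y.2.1) *~ y.1 = 0) ->
  tensor_zero t.
Proof.
move=> H; apply/tzE.
pose q (y : int * T) j := y.2.2 0 j *: y.2.1.
have S1 := Zs_sum t (fun y => ZsZ y.1 (dd_row y.2.1 y.2.2)).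
have S4 : Zs (fun x : T => \sum_(j < m) \sum_(y <- t) y.1 * dd (q y j, delta_mx 0 j) x).
  apply: (@Zs_sum _ _ _ _ (index_enum 'I_m) (fun (j : 'I_m) (x : T) => \sum_(y <- t) y.1 * dd (q y j, (delta_mx 0 j : 'rV[R]_m)) x)) => j.
  pose D := fun u : P => dd (u, (delta_mx 0 j : 'rV[R]_m)).
  have HD : forall u v, Zs (fun x => D (u + v) x - D u x - D v x).
    by move=> u v; apply: rel1.
  have S2 := Dsum HD t (fun y => q y j *~ y.1).
  have S3 := Zs_sum t (fun y => Dint HD (q y j) y.1).
  have Hj : \sum_(y <- t) q y j *~ y.1 = 0 := H j.
  rewrite Hj in S2.
  have S0 := D0 HD.
  apply: Zs_ext (ZsB (ZsB S0 S2) S3) => x /=.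
  by rewrite sumrB /D; ring.
apply: Zs_ext (ZsD S1 S4) => x /=.
rewrite fcoefE exchange_big /= -big_split /=; apply: eq_bigr => -[n [p a]] _ /=.
by rewrite mulrBr mulr_sumr subrK.
Qed.
End TFree.

Lemma sval0 (R : comPzRingType) (M : lmodType R) (N : submod M) : subval (0 : subT N) = 0.
Proof. by []. Qed.

Lemma part1 (R : comPzRingType) (S : {pred R}) : mult_subset S ->
  forall M : lmodType R, S_finite S M -> uS_projective S M -> uS_fin_presented S M.
Proof.
move=> [S1 SM] M [s sS [n [x Hx]]] Hproj.
pose pi (v : 'rV[R]_n) : M := \sum_i v 0 i *: x i.
have pi_lin : linear pi.
  move=> a u v; rewrite /pi scaler_sumr -big_split; apply: eq_bigr => i _.
  by rewrite !mxE scalerDl scalerA.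
have pi_s : forall m, exists v, pi v = s *: m.
  move=> m; have [c Hc] := Hx m; exists (\row_i c i); rewrite Hc /pi.
  by apply: eq_bigr => i _; rewrite mxE.
pose K := kerS pi_lin.
have ex : uS_short_exact S (@subval _ _ K) pi.
  split; [|split].
  - exists 1 => //; split => /=.
      by move=> y _ Hy; exists 0 => //; rewrite scale1r; apply: subval_inj.
    by move=> _ _; rewrite scaler0.
  - exists 1 => //; split => /=.
      by move=> y _ Hy; exists (mkS (NS := K) Hy) => //; rewrite scale1r.
    by move=> k _; rewrite scale1r; apply: (subvalP k).
  - exists s => //; split => /=.
      by move=> m _ _; have [v Hv] := pi_s m; exists v.
    by [].
have [_ [_ [t tS [Hlift _]]]] := Hproj _ _ _ _ pi (@subval_lin _ _ K) pi_lin ex.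
have [sigma sig_lin Hsig] : exists2 sigma : M -> 'rV[R]_n, linear sigma &
    forall p, pi (sigma p) = t *: p.
  have := Hlift id (fun _ _ _ => erefl) (fun _ => erefl).
  by case=> sg lsg Hs; exists sg.
pose phi (v : 'rV[R]_n) := t *: v - sigma (pi v).
have phi_lin : linear phi.
  move=> a u v; rewrite /phi (linD pi_lin) (linZ pi_lin) sig_lin.
  by rewrite scalerDr scalerBr scalerA mulrC -scalerA; rewrite opprD addrACA.
have piphi : forall v, pi (phi v) = 0.
  by move=> v; rewrite /phi (linB pi_lin) Hsig (linZ pi_lin) subrr.
pose N := imS phi_lin.
pose F := quotT N.
pose hF (y : F) := pi (qval y).
have hFq : forall v, hF (mkQ N v) = pi v.
  move=> v; have [w Hw] := qval_equiv N v.
  by apply/eqP; rewrite -subr_eq0 /hF -(linB pi_lin) -Hw piphi.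
have hF_lin : linear hF.
  move=> a y z; have [u <-] := mkQ_surj y; have [w <-] := mkQ_surj z.
  by rewrite -(mkQ_lin N) !hFq pi_lin.
pose T1 := subT (kerS hF_lin).
pose T2 := quotT (imS hF_lin).
exists (s * t); first exact: SM.
exists T1, F, T2, (@subval _ _ (kerS hF_lin)), hF, (mkQ (imS hF_lin)).
split; [split|split].
- exact: subval_lin.
- exact: hF_lin.
- exact: mkQ_lin.
- exists n, n, phi, (mkQ N); split.
  + exact: phi_lin.
  + exact: mkQ_lin.
  + exact: mkQ_surj.
  + by move=> v; rewrite mkQ_zero.
- split.
  + by move=> k Hk; apply: subval_inj.
  + move=> y; split; first by move=> Hy; exists (mkS (NS := kerS hF_lin) Hy).
    by move=> [k <-]; apply: (subvalP k).
  + by move=> m; rewrite mkQ_zero.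
  + exact: mkQ_surj.
- move=> k; apply: subval_inj; rewrite sval0 /=.
  have Hk := subvalP k; move: (subval k) Hk => y /= Hy.
  have [v Hv] := mkQ_surj y; subst y; rewrite hFq in Hy.
  rewrite -(linZ (mkQ_lin N)) mkQ_zero; exists (s *: v).
  by rewrite /phi (linZ pi_lin) Hy scaler0 (lin0 sig_lin) subr0 scalerA mulrC.
- move=> z; have [m <-] := mkQ_surj z.
  rewrite -(linZ (mkQ_lin _)) mkQ_zero.
  have [v Hv] := pi_s m; exists (mkQ N (t *: v)).
  by rewrite hFq (linZ pi_lin) Hv scalerA mulrC.
Qed.

Section Delta.
Variables (R : comPzRingType) (n : nat).
Lemma e_coef (i l : 'I_n) : (delta_mx 0 i : 'rV[R]_n) 0 l = (i == l)%:R.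
Proof. by rewrite mxE eqxx /= eq_sym. Qed.
Lemma sum_eZ (V : lmodType R) (i : 'I_n) (F : 'I_n -> V) :
  \sum_l ((delta_mx 0 i : 'rV[R]_n) 0 l) *: F l = F i.
Proof.
rewrite (bigD1 i) //= e_coef eqxx scale1r big1 ?addr0 // => l /negPf.
by rewrite e_coef eq_sym => ->; rewrite scale0r.
Qed.
Lemma sum_eM (i : 'I_n) (F : 'I_n -> R) :
  \sum_l ((delta_mx 0 i : 'rV[R]_n) 0 l) * F l = F i.
Proof.
rewrite (bigD1 i) //= e_coef eqxx mul1r big1 ?addr0 // => l /negPf.
by rewrite e_coef eq_sym => ->; rewrite mul0r.
Qed.
Lemma lin_row (V : lmodType R) (f : 'rV[R]_n -> V) (lf : linear f) v :
  f v = \sum_l v 0 l *: f (delta_mx 0 l).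
Proof.
by rewrite {1}(row_sum_delta v) (lin_sum lf); apply: eq_bigr => l _; rewrite (linZ lf).
Qed.
End Delta.

Lemma ex_subquot (R : comPzRingType) (S : {pred R}) (M : lmodType R) (N : submod M) :
  1 \in S -> uS_short_exact S (@subval _ _ N) (mkQ N).
Proof.
move=> S1; split; [|split].
- exists 1 => //; split => /=.
    by move=> y _ Hy; exists 0 => //; rewrite scale1r; apply: subval_inj.
  by move=> _ _; rewrite scaler0.
- exists 1 => //; split => /=.
    by move=> y _ /mkQ_zero Hy; exists (mkS (NS := N) Hy) => //; rewrite scale1r.
  by move=> k _; rewrite scale1r; apply/mkQ_zero; apply: (subvalP k).
- exists 1 => //; split => //= z _ _.
  by have [v <-] := mkQ_surj z; exists v; rewrite ?scale1r.
Qed.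

Lemma ev_sub (R : comPzRingType) (P A : lmodType R) (V : zmodType) (beta : P -> A -> V) t1 t2 :
  ev beta (tensor_sub t1 t2) = ev beta t1 - ev beta t2.
Proof.
rewrite /ev /tensor_sub big_cat big_map /=; congr (_ + _).
by rewrite -sumrN; apply: eq_bigr => y _; rewrite mulrNz.
Qed.

Lemma sum_eZ' (R : comPzRingType) (n : nat) (V : lmodType R) (l : 'I_n) (F : 'I_n -> V) :
  \sum_i ((delta_mx 0 i : 'rV[R]_n) 0 l) *: F i = F l.
Proof.
rewrite (bigD1 l) //= e_coef eqxx scale1r big1 ?addr0 // => i /negPf.
by rewrite e_coef => ->; rewrite scale0r.
Qed.

Lemma core (R : comPzRingType) (S : {pred R}) : mult_subset S -> forall M : lmodType R,
  uS_fin_presented S M -> uS_flat S M ->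
  exists n (psi : 'rV[R]_n -> M) (xK : seq (int * (M * 'rV[R]_n))) (sa sb sc : R),
  [/\ sa \in S, sb \in S, sc \in S, linear psi &
  [/\ forall mm, exists v, psi v = sa *: mm,
      forall z, z \in xK -> forall d, psi d = 0 -> sb * \sum_l d 0 l * z.2.2 0 l = 0 &
      forall l, sc *: psi (delta_mx 0 l) = \sum_(z <- xK) (z.2.2 0 l *: z.2.1) *~ z.1]].
Proof.
move=> [S1 SM] M [s0 s0S [T1 [F [T2 [i [hF [q2 [H1 [sT1 sT2]]]]]]]]] flat.
case: H1 => li lhF lq2 [n [m [phi [pi [lphi lpi pisurj piker]]]]] [iinj hFker q2ker q2surj].
pose psi := hF \o pi.
have psi_lin : linear psi := linear_comp lpi lhF.
have psi_s : forall mm, exists v, psi v = s0 *: mm.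
  move=> mm; have : q2 (s0 *: mm) = 0 by rewrite (linZ lq2) sT2.
  move/q2ker => [y Hy]; have [v Hv] := pisurj y; exists v.
  by rewrite /psi /= Hv Hy.
have psi_ker : forall v, psi v = 0 -> exists w, phi w = s0 *: v.
  move=> v /hFker [k Hk]; apply/piker.
  by rewrite (linZ lpi) -Hk -(linZ li) sT1 (lin0 li).
have psi_phi : forall w, psi (phi w) = 0.
  move=> w; rewrite /psi /=.
  have -> : pi (phi w) = 0 by apply/piker; exists w.
  exact: lin0 lhF.
pose Phi (l : 'I_n) (j : 'I_m) := (phi (delta_mx 0 j)) 0 l.
pose g0 (v : 'rV[R]_n) : 'rV[R]_m := \row_j \sum_l v 0 l * Phi l j.
have g0_lin : linear g0.
  move=> a u v; apply/rowP => j; rewrite !mxE mulr_sumr -big_split /=.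
  by apply: eq_bigr => l _; rewrite !mxE mulrDl mulrA.
pose Isub := imS g0_lin.
pose Ksub := kerS g0_lin.
pose g0' (v : 'rV[R]_n) : subT Isub :=
  mkS (NS := Isub) (x := g0 v) (ex_intro (fun u => g0 u = g0 v) v erefl).
have g0'_lin : linear g0'.
  by move=> a u v; apply: subval_inj; rewrite /= g0_lin.
have ex1 : uS_short_exact S (@subval _ _ Ksub) g0'.
  split; [|split].
  - exists 1 => //; split => /=.
      by move=> y _ Hy; exists 0 => //; rewrite scale1r; apply: subval_inj.
    by move=> _ _; rewrite scaler0.
  - exists 1 => //; split => /=.
      move=> y _ Hy; have Hy' : g0 y = 0 by have := congr1 (@subval _ _ Isub) Hy.
      by exists (mkS (NS := Ksub) Hy') => //; rewrite scale1r.
    move=> k _; apply: subval_inj; rewrite /= scale1r.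
    exact: (subvalP k).
  - exists 1 => //; split => //= z _ _.
    have [v Hv] := subvalP z; exists v => //.
    by apply: subval_inj; rewrite /= scale1r.
have ex2 := @ex_subquot _ S _ Isub S1.
have [[s4 s4S [F2 _]] _] := flat _ _ _ _ _ (@subval_lin _ _ Isub) (mkQ_lin Isub) ex2.
have [_ [[s5 s5S [F1 _]] _]] := flat _ _ _ _ _ (@subval_lin _ _ Ksub) g0'_lin ex1.
pose t0 := [seq (1%:Z, (psi (delta_mx 0 i), (delta_mx 0 i : 'rV[R]_n))) | i <- index_enum 'I_n].
have tz1 : tensor_zero (tensor_map (@subval _ _ Isub) (tensor_map g0' t0)).
  apply: tz_free => j; rewrite /tensor_map -!map_comp big_map /=.
  under eq_bigr => i0 _ do rewrite mulr1z mxE sum_eM.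
  by rewrite -(lin_row psi_lin) psi_phi.
have [x2 _ Hx2] := F2 _ I tz1.
have tz2 := tz_sub_cancel (tz_map0 _ _) Hx2.
have e2 : tensor_scale s4 (tensor_map g0' t0) = tensor_map g0' (tensor_scale s4 t0).
  rewrite /tensor_scale /tensor_map -!map_comp; apply: eq_map => y /=.
  by rewrite (linZ g0'_lin).
rewrite e2 in tz2.
have [xK _ HxK] := F1 _ I tz2.
exists n, psi, (tensor_map (@subval _ _ Ksub) xK), s0, s0, (s5 * s4).
split => //; first exact: SM.
split => //.
- move=> z /mapP [z' _ ->] d /psi_ker [w Hw] /=.
  have Hk : g0 (subval z'.2.2) = 0 := subvalP z'.2.2.
  move: (subval z'.2.2) Hk => k Hk.
  have -> : s0 * \sum_l d 0 l * k 0 l = \sum_l (phi w) 0 l * k 0 l.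
    by rewrite Hw mulr_sumr; apply: eq_bigr => l _; rewrite mxE mulrA.
  rewrite (lin_row lphi w).
  under eq_bigr => l _ do rewrite summxE mulr_suml.
  rewrite exchange_big /=; apply: big1 => j _.
  transitivity (w 0 j * (g0 k) 0 j); last by rewrite Hk mxE mulr0.
  rewrite mxE mulr_sumr; apply: eq_bigr => l _.
  by rewrite !mxE /Phi -mulrA [k 0 l * _]mulrC.
- move=> l.
  pose beta (p : M) (v : 'rV[R]_n) := v 0 l *: p.
  have b1 : forall p p' a, beta (p + p') a = beta p a + beta p' a.
    by move=> p p' a; rewrite /beta scalerDr.
  have b2 : forall p a a', beta p (a + a') = beta p a + beta p a'.
    by move=> p a a'; rewrite /beta mxE scalerDl.
  have b3 : forall c p a, beta (c *: p) a = beta p (c *: a).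
    by move=> c p a; rewrite /beta mxE scalerA mulrC.
  have E := ev_tz b1 b2 b3 HxK; rewrite ev_sub in E; move/eqP: E; rewrite subr_eq0 => /eqP E.
  transitivity (ev beta (tensor_map (@subval _ _ Ksub) xK)); last by [].
  rewrite E.
  rewrite /ev /tensor_scale /t0 -!map_comp big_map /=.
  under eq_bigr => i0 _ do rewrite mulr1z /beta !mxE mulrA -scalerA.
  rewrite -scaler_sumr; congr (_ *: _); rewrite (bigD1 l) //= eqxx /= scale1r big1 ?addr0 // => i0.
  by rewrite eq_sym => /negPf ->; rewrite scale0r.
Qed.

Lemma part2 (R : comPzRingType) (S : {pred R}) : mult_subset S ->
  forall M : lmodType R, uS_fin_presented S M -> uS_flat S M -> uS_projective S M.
Proof.
move=> HS M fp fl; have [S1 SM] := HS.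
have [n [psi [xK [sa [sb [sc [saS sbS scS psi_lin [psi_s kill EQ]]]]]]]] := core HS fp fl.
move=> A B C f g lf lg [[s1 s1S [Ha _]] [[s2 s2S [Hb1 Hb2]] [s3 s3S [Hc _]]]].
split; [|split].
- exists s1 => //; split => /=.
    move=> h lh Hfh; exists (fun _ => 0).
      by move=> a u v; rewrite scaler0 addr0.
    by move=> p /=; have [_ _ ->] := Ha (h p) I (Hfh p).
  by move=> x _ p /=; rewrite scaler0 (lin0 lf).
- exists (s1 * s2); first exact: SM.
  split => /=; last by move=> x _ p /=; rewrite -scalerA (linZ lg) (Hb2 _ I) scaler0.
  move=> h lh Hgh.
  pose ch p := epsilon (inhabits (0 : A)) (fun a => f a = s2 *: h p).
  have chP : forall p, f (ch p) = s2 *: h p.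
    move=> p; apply: (epsilon_spec (inhabits (0 : A)) (fun a => f a = s2 *: h p)).
    by have [a _ Ha'] := Hb1 (h p) I (Hgh p); exists a.
  exists (fun p => s1 *: ch p).
    move=> a u v /=.
    set d := ch (a *: u + v) - (a *: ch u + ch v).
    have fd : f d = 0.
      rewrite /d (linB lf) (linD lf) (linZ lf) !chP lh scalerDr scalerA mulrC -scalerA.
      by rewrite subrr.
    have [_ _ E] := Ha d I fd.
    move: E; rewrite /d scalerBr scalerDr scalerA mulrC -scalerA => /esym/eqP.
    by rewrite subr_eq0 => /eqP.
  by move=> p /=; rewrite (linZ lf) chP scalerA.
- exists (sb * (s3 * (sc * sa))); first exact: (SM _ _ sbS (SM _ _ s3S (SM _ _ scS saS))).
  split => //= h lh _.
  pose bz (z : int * (M * 'rV[R]_n)) :=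
    epsilon (inhabits (0 : B)) (fun b => g b = s3 *: h z.2.1).
  have bzP : forall z, g (bz z) = s3 *: h z.2.1.
    move=> z; apply: (epsilon_spec (inhabits (0 : B)) (fun b => g b = s3 *: h z.2.1)).
    by have [b _ Hb] := Hc (h z.2.1) I erefl; exists b.
  pose c (z : int * (M * 'rV[R]_n)) (v : 'rV[R]_n) := \sum_l v 0 l * z.2.2 0 l.
  have c_lin : forall z a u v, c z (a *: u + v) = a * c z u + c z v.
    move=> z a u v; rewrite /c mulr_sumr -big_split; apply: eq_bigr => l _.
    by rewrite !mxE mulrDl mulrA.
  pose Lam (v : 'rV[R]_n) := \sum_(z <- xK) (c z v *: bz z) *~ z.1.
  have Lam_lin : linear Lam.
    move=> a u v; rewrite /Lam scaler_sumr -big_split; apply: eq_bigr => z _.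
    by rewrite c_lin scalerDl -scalerA mulrzDl scalerMzr.
  have key : forall v, \sum_(z <- xK) (c z v *: z.2.1) *~ z.1 = sc *: psi v.
    move=> v; rewrite (lin_row psi_lin v) scaler_sumr.
    under [RHS]eq_bigr => l _ do rewrite scalerA mulrC -scalerA EQ scaler_sumr.
    rewrite exchange_big /=; apply: eq_bigr => z _.
    rewrite /c scaler_suml mulrz_suml; apply: eq_bigr => l _.
    by rewrite scalerMzr scalerMzr scalerA.
  have gLam : forall v, g (Lam v) = s3 *: h (sc *: psi v).
    move=> v; rewrite -key (lin_sum lh) (lin_sum lg) scaler_sumr; apply: eq_bigr => z _.
    rewrite -!scaler_int !(linZ lg) !(linZ lh) bzP !scalerA; congr (_ *: _).
    by rewrite mulrC mulrA.
  have LamK : forall d, psi d = 0 -> sb *: Lam d = 0.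
    move=> d Hd; rewrite /Lam scaler_sumr big_seq; apply: big1 => z zK.
    by rewrite -scalerMzr scalerA kill // scale0r mul0rz.
  pose ch p := epsilon (inhabits (0 : 'rV[R]_n)) (fun v => psi v = sa *: p).
  have chP : forall p, psi (ch p) = sa *: p.
    move=> p; apply: (epsilon_spec (inhabits (0 : 'rV[R]_n)) (fun v => psi v = sa *: p)).
    exact: psi_s.
  exists (fun p => sb *: Lam (ch p)).
    move=> a u v /=.
    set d := ch (a *: u + v) - (a *: ch u + ch v).
    have Hd : psi d = 0.
      rewrite /d (linB psi_lin) (linD psi_lin) (linZ psi_lin) !chP.
      by rewrite scalerDr scalerA mulrC -scalerA subrr.
    have := LamK d Hd; rewrite /d (linB Lam_lin) (linD Lam_lin) (linZ Lam_lin).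
    rewrite scalerBr scalerDr scalerA mulrC -scalerA => /eqP.
    by rewrite subr_eq0 => /eqP.
  move=> p /=; rewrite (linZ lg) gLam chP !(linZ lh) !scalerA.
  by rewrite !mulrA.
Qed.

Theorem proposition2p8 (R : comPzRingType) (S : {pred R}) :
  mult_subset S ->
  (forall M : lmodType R, S_finite S M -> uS_projective S M -> uS_fin_presented S M) /\
  (forall M : lmodType R, uS_fin_presented S M -> uS_flat S M -> uS_projective S M).
Proof.
move=> HS; split.
  by move=> M; apply: part1.
by move=> M; apply: part2.
Qed.
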